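(* Let $n\ge0$ and $i,j\in D$. Suppose that for $m=1,\dots,r$ we are given $a_m,b_m\in D$ with $\mathcal F_n(a_m)\subseteq\mathcal F_n(b_m)$, $A_i(a_m)=1$ and $A_j(b_m)=1$, and that $A_i(c)\le A_j(c)$ for all $c\notin\{a_m:m=1,\dots,r\}$. Then $\mathcal F_{n+1}(i)\subseteq\mathcal F_{n+1}(j)$.
   Context: Fix integers $k\ge1$, $d\ge1$, $K=\{1,\dots,k\}$, $D=\{1,\dots,d\}$. The $k$-tree is the set $K^*$ of finite words over $K$ with root the empty word $\epsilon$; $xg$ ($g\in K$) are the children of $x$. $L_n$ is the set of words of length exactly $n$ and $\Delta_n$ the set of words of length at most $n$. $A$ is a $d\times d$ matrix with entries in $\{0,1\}$, and $A_i(m)=A(i,m)$. A (valid) labeling of $\Delta_n$ is a map $\lambda:\Delta_n\to D$ with $A(\lambda(x),\lambda(xg))=1$ for all $x\in\Delta_{n-1}$, $g\in K$. The $n$-follower set of $a\in D$ is $\mathcal F_n(a)=\{\lambda|_{L_n}: \lambda \text{ a valid labeling of } \Delta_n \text{ with } \lambda(\epsilon)=a\}$. *)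

(* Defs.v *)
From mathcomp Require Import all_boot all_algebra.
Set Implicit Arguments. Unset Strict Implicit. Unset Printing Implicit Defensive.

(* Alphabet K = 'I_k (children labels), symbol set D = 'I_d.
   Words of the k-tree: seq 'I_k; root = [::]; children of x are rcons x g. *)

Definition valid_labeling (k d : nat) (A : 'M[bool]_d) (n : nat)
  (lam : seq 'I_k -> 'I_d) : Prop :=
  forall (x : seq 'I_k) (g : 'I_k), size x < n -> A (lam x) (lam (rcons x g)).

Definition restrict_Ln (k d n : nat) (lam : seq 'I_k -> 'I_d)
  : {ffun n.-tuple 'I_k -> 'I_d} := [ffun w : n.-tuple 'I_k => lam (tval w)].

(* n-follower set F_n(a): the set of restrictions to L_n of valid labelings
   of Delta_n with root label a.  (Values of lam outside Delta_n are irrelevant.) *)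
Definition follower (k d : nat) (A : 'M[bool]_d) (n : nat) (a : 'I_d)
  : {ffun n.-tuple 'I_k -> 'I_d} -> Prop :=
  fun f => exists lam : seq 'I_k -> 'I_d,
    [/\ valid_labeling A n lam, lam [::] = a & restrict_Ln n lam = f].

Definition follower_sub (k d : nat) (A : 'M[bool]_d) (n : nat) (a b : 'I_d) : Prop :=
  forall f, @follower k d A n a f -> @follower k d A n b f.

(* Main.v *)
Require Import Defs.
From mathcomp Require Import all_boot all_algebra.
From Stdlib Require Import ClassicalEpsilon.

Lemma restr_eq (k d n : nat) (l1 l2 : seq 'I_k -> 'I_d) :
  restrict_Ln n l1 = restrict_Ln n l2 -> forall x, size x = n -> l1 x = l2 x.
Proof.
move=> E x Hx.
have Hx' : size x == n by apply/eqP.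
have := congr1 (fun f : {ffun n.-tuple 'I_k -> 'I_d} => f (Tuple Hx')) E.
by rewrite !ffunE.
Qed.

Theorem proposition3p8 (k d : nat) (hk : 0 < k) (hd : 0 < d)
  (A : 'M[bool]_d) (n : nat) (i j : 'I_d) (r : nat) (a b : 'I_r -> 'I_d) :
  (forall m : 'I_r, follower_sub k A n (a m) (b m)) ->
  (forall m : 'I_r, A i (a m)) ->
  (forall m : 'I_r, A j (b m)) ->
  (forall c : 'I_d, (forall m : 'I_r, c != a m) -> A i c <= A j c) ->
  follower_sub k A n.+1 i j.
Proof.
move=> Hsub Hai Hbj Hc f [lam [Hv Hr Hf]].
have Hsubtree : forall g : 'I_k, valid_labeling A n (fun x => lam (g :: x)).
  move=> g x h Hx; have := Hv (g :: x) h; rewrite /= ltnS; exact.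
have Hex : forall g : 'I_k, exists mu : seq 'I_k -> 'I_d,
    [/\ valid_labeling A n mu, A j (mu [::]) &
        forall x, size x = n -> mu x = lam (g :: x)].
  move=> g.
  case: (pickP (fun m => lam [:: g] == a m)) => [m /eqP Hm|Hn].
    have [mu [Hmu H0 Hres]] :=
      Hsub m (restrict_Ln n (fun x => lam (g :: x)))
        (ex_intro _ (fun x => lam (g :: x)) (And3 (Hsubtree g) Hm erefl)).
    exists mu; split => //; first by rewrite H0.
    exact: restr_eq.
  exists (fun x => lam (g :: x)); split => //.
  have Hig := Hv [::] g (ltn0Sn n); rewrite Hr /= in Hig.
  have := Hc (lam [:: g]) (fun m => negbT (Hn m)).
  by rewrite Hig; case: (A j _).
pose mu g := proj1_sig (constructive_indefinite_description _ (Hex g)).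
have Hmu g : [/\ valid_labeling A n (mu g), A j (mu g [::]) &
        forall x, size x = n -> mu g x = lam (g :: x)].
  exact: (proj2_sig (constructive_indefinite_description _ (Hex g))).
exists (fun x => match x with [::] => j | g :: x' => mu g x' end); split => //.
- case => [|g x] h /= Hx; first by have [] := Hmu h.
  by have [V _ _] := Hmu g; apply: V.
- rewrite -Hf; apply/ffunP => w; rewrite !ffunE.
  case: w => [[|g x] /= Hw] //.
  by have [_ _ ->] := Hmu g; last by move/eqP: Hw => [].
Qed.
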